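(* Let $p$ be a prime and let $G$ be a finite $p$-group such that $\mathrm{cod}(G)=\{1,p,p^b,p^a\}$, where $2\le b<a$, and suppose $G$ has nilpotence class $n\ge 3$. Suppose $|G|$ is minimal with this property, i.e. no finite $p$-group $H$ with $\mathrm{cod}(H)=\{1,p,p^b,p^a\}$ and $|H|<|G|$ has nilpotence class $n$. Then $G$ has a faithful irreducible character.
   Context: For an irreducible complex character $\chi$ of a finite group $G$, the codegree of $\chi$ is $\mathrm{cod}(\chi)=|G:\ker\chi|/\chi(1)$, and $\mathrm{cod}(G)$ denotes the set of codegrees of the irreducible characters of $G$. *)

(* Defs.v *)
From mathcomp Require Import all_boot all_order all_algebra all_fingroup all_solvable all_field all_character.
Set Implicit Arguments. Unset Strict Implicit. Unset Printing Implicit Defensive.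
Import GRing.Theory Num.Theory.
Local Open Scope ring_scope.

Definition cod (gT : finGroupType) (G : {group gT}) (i : Iirr G) : algC :=
  (#|G : cfker 'chi[G]_i|%g%:R) / 'chi[G]_i 1%g.

Definition cod_set_eq (gT : finGroupType) (G : {group gT}) (S : seq algC) : Prop :=
  forall x : algC, (exists i : Iirr G, cod i = x) <-> x \in S.

(* Main.v *)
Require Import Defs.
From mathcomp Require Import all_boot all_order all_algebra all_fingroup all_solvable all_field all_character.
From mathcomp Require Import zify.
Local Open Scope ring_scope.

Import GRing.Theory Num.Theory.

Lemma pgroup_ge (gT : finGroupType) (p : nat) (A : {group gT}) : (p.-group A)%g -> (A != 1 :> {set gT})%g -> (p <= #|A|)%N.
Proof.
move=> pA ntA; have [pp dp _] := pgroup_pdiv pA ntA.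
exact: dvdn_leq dp.
Qed.


Lemma small_abelian (gT : finGroupType) (p : nat) (A : {group gT}) :
  prime p -> (p.-group A)%g -> (#|A| <= p ^ 2)%N -> abelian A.
Proof.
move=> pp pA le; apply: (p2group_abelian pA).
have [m Em] := p_natP pA; rewrite Em pfactorK //.
by move: le; rewrite Em leq_exp2l // prime_gt1.
Qed.

Lemma cyclic_card_dvd (gT : finGroupType) (A : {group gT}) n :
  cyclic A -> {in A, forall x, (x ^+ n = 1)%g} -> (#|A| %| n)%N.
Proof. by move=> cA h; rewrite -exponent_cyclic //; apply/exponentP. Qed.

Lemma irr_lin1 (gT : finGroupType) (G : {group gT}) (i : Iirr G) :
  'chi_i 1%g = 1 -> 'chi_i \is a linear_char.
Proof. by move=> h; rewrite qualifE /= irr_char h eqxx. Qed.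

Section Helpers.
Variables (gT : finGroupType) (G : {group gT}).

Lemma irr1_nat (i : Iirr G) : exists d : nat, 'chi_i 1%g = d%:R /\ (0 < d)%N.
Proof.
have [d hd] : exists d : nat, 'chi_i 1%g = d%:R.
  by exists (irr_degree (socle_of_Iirr i)); rewrite irr1_degree.
by exists d; split=> //; have := irr1_gt0 i; rewrite hd ltr0n.
Qed.

Lemma cod_ltP (i : Iirr G) (d q : nat) : 'chi_i 1%g = d%:R ->
  (q%:R < cod i) = (q * d < #|G : cfker 'chi_i|%g)%N.
Proof.
move=> hd; have := irr1_gt0 i; rewrite hd => d0.
by rewrite /cod hd ltr_pdivlMr // -natrM ltr_nat.
Qed.

Lemma cod_eqP (i j : Iirr G) (di dj : nat) : 'chi_i 1%g = di%:R -> 'chi_j 1%g = dj%:R ->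
  (cod i == cod j) = (#|G : cfker 'chi_i|%g * dj == #|G : cfker 'chi_j|%g * di)%N.
Proof.
move=> hi hj; have := irr1_gt0 i; have := irr1_gt0 j; rewrite hi hj => dj0 di0.
rewrite /cod hi hj eqr_div ?gt_eqF ?lt0r_neq0 // ?lt0r_neq0 //.
by rewrite -!natrM eqr_nat.
Qed.

Lemma cod_lin (i : Iirr G) : 'chi_i \is a linear_char -> cod i = (#['chi_i]%CF)%:R.
Proof.
move=> lin; rewrite /cod lin_char1 // divr1 cforder_lin_char //.
have nK := normal_norm (cfker_normal 'chi_i).
have abK : abelian (G / cfker 'chi_i)%g by apply: sub_der1_abelian; apply: lin_char_der1.
have cyc : cyclic (G / cfker 'chi_i)%g.
  have := cfcenter_cyclic 'chi_i; rewrite cfcenter_eq_center.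
  by rewrite (center_idP abK).
by rewrite exponent_cyclic // card_quotient.
Qed.


Lemma cod0 : cod (0 : Iirr G) = 1.
Proof. by rewrite /cod cfker_irr0 indexgg irr0 cfun11 divr1. Qed.

Lemma cod_mod (N : {group gT}) (nN : (N <| G)%g) (i : Iirr (G / N)) :
  cod (mod_Iirr i) = cod i.
Proof.
rewrite /cod mod_IirrE // cfMod1; congr (_%:R / _).
have E := quotient_cfker_mod G ('chi_i) nN. rewrite -E.
symmetry; apply: index_quotient_eq.
- by apply: subIset; apply/orP; right; apply: cfker_mod.
- exact: cfker_sub.
- exact: normal_norm.
Qed.

Lemma class_quo (K : {group gT}) m : (K <| G)%g -> nilpotent G ->
  (nil_class (G / K) <= m)%N = ('L_m.+1(G) \subset K)%g.
Proof.
move=> nK nilG; have nGK := normal_norm nK.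
have sLN : ('L_m.+1(G) \subset 'N(K))%g by apply: subset_trans nGK; apply: lcn_sub.
rewrite -(quotient_sub1 sLN).
rewrite /quotient (morphim_lcn _ _ nGK) -/(quotient _ _).
by apply/(lcn_nil_classP m (quotient_nil K nilG))/trivgP.
Qed.

Lemma lin_pow (p : nat) (i : Iirr G) k j : prime p -> 'chi_i \is a linear_char ->
  #['chi_i]%CF = (p ^ k)%N -> (0 < j <= k)%N ->
  exists i' : Iirr G, 'chi_i' \is a linear_char /\ #['chi_i']%CF = (p ^ j)%N.
Proof.
move=> pp lin oi /andP[j0 jk].
set mu := 'chi_i ^+ (p ^ (k - j)).
have linmu : mu \is a linear_char.
  rewrite /mu; elim: (p ^ (k - j))%N => [|n IH]; first by rewrite expr0 cfun1_lin_char.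
  by rewrite exprS; apply: rpredM.
have /irrP[i' def] := lin_char_irr linmu.
exists i'; split; first by rewrite -def.
rewrite -def.
have d1 : (#[mu]%CF %| p ^ j)%N.
  by rewrite dvdn_cforder /mu -exprM -expnD subnK // -oi -dvdn_cforder.
have [m mj om] := dvdn_pfactor _ _ pp d1.
rewrite om; congr (p ^ _)%N; apply/eqP; rewrite eqn_leq mj /=.
rewrite leqNgt; apply/negP => lt_mj.
have : (#[mu]%CF %| p ^ j.-1)%N by rewrite om dvdn_exp2l //; lia.
rewrite dvdn_cforder /mu -exprM -expnD -dvdn_cforder oi dvdn_Pexp2l ?prime_gt1 //.
lia.
Qed.

Lemma irr1_sq_le (i : Iirr G) d : 'chi_i 1%g = d%:R ->
  (d * d <= #|G : 'Z('chi_i)%CF|%g)%N.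
Proof.
move=> hd; have := (irr1_bound i).1; rewrite hd -natrX ler_nat.
by rewrite expnS expn1.
Qed.

Lemma NL (p : nat) (i : Iirr G) d : (p.-group G)%g -> 'chi_i 1%g = d%:R -> (1 < d)%N ->
  (p * d < #|G : cfker 'chi_i|%g)%N.
Proof.
move=> pG hd d1.
have sq := irr1_sq_le i d hd.
set K := cfker 'chi_i; set Zc := 'Z('chi_i)%CF.
have sKZ : (K \subset Zc)%g := normal_sub (cfker_center_normal _).
have sZG : (Zc \subset G)%g := cfcenter_sub _.
have L : (#|G : Zc|%g * #|Zc : K|%g = #|G : K|%g)%N by apply: Lagrange_index.
have nKG := normal_norm (cfker_normal 'chi_i).
have i0 : i != 0.
  apply/eqP => i0; move: hd; rewrite i0 irr0 cfun11 => /esym/eqP.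
  by rewrite pnatr_eq1 => /eqP d_1; rewrite d_1 in d1.
have ntq : (G / K != 1)%g.
  apply: contra i0 => /eqP/trivgP; rewrite quotient_sub1 //.
  by rewrite -subGcfker.
have ntZ : ('Z(G / K) != 1)%g by rewrite center_nil_eq1 // quotient_nil // (pgroup_nil pG).
have pZ : (p.-group ('Z(G / K)))%g by apply: pgroupS (center_sub _) _; apply: quotient_pgroup.
have pt0 : (p <= #|'Z(G / K)%g|)%N := pgroup_ge _ _ _ pZ ntZ.
have pt : (p <= #|Zc : K|%g)%N.
  move: pt0; rewrite /K -cfcenter_eq_center card_quotient //.
  by apply: subset_trans nKG; apply: cfcenter_sub.
have t0 := indexg_gt0 Zc K.
rewrite -L; move: sq pt t0 d1; move: (#|G : Zc|%g) (#|Zc : K|%g) => a t; rewrite -/Zc. nia.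
Qed.

End Helpers.

Section Arith.
Local Open Scope nat_scope.
Lemma arith1 (PM t a m N z w d0 e p : nat) :
  PM * d0 = N * e -> a * t = PM -> m * PM = N -> z <= m -> t <= p * p -> 0 < t ->
  z * w = N -> d0 * d0 <= w -> e * e = a -> p <= z -> 0 < e -> 1 < p ->
  [/\ z = p, m = p & t = p * p].
Proof.
move=> E LPM LM mz tle t0 LZ sq F2 pz e0 p1.
have a0 : 0 < a by rewrite -F2 muln_gt0 e0.
have h1 : d0 = m * e.
  apply/eqP; rewrite -(eqn_pmul2l (_ : 0 < a * t)); last by rewrite muln_gt0 a0.
  apply/eqP; rewrite LPM E -LM -LPM; lia.
have h2 : m * z <= t.
  have m0 : 0 < m by apply: leq_trans mz; apply: leq_trans pz; apply: ltnW.
  rewrite -(leq_pmul2l (_ : 0 < m * a)); last by rewrite muln_gt0 m0.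
  have : z * (d0 * d0) <= z * w by rewrite leq_pmul2l //; apply: leq_trans pz; apply: ltnW.
  rewrite LZ -LM -LPM h1 -F2 => H.
  move: H; rewrite -!mulnA; lia.
have zz : p * p <= z * z by apply: leq_mul.
have zm : z * z <= m * z by rewrite leq_mul2r mz orbT.
have hz : z = p.
  apply/eqP; rewrite eqn_leq pz andbT leqNgt; apply/negP => pltz.
  have : p * p < z * z by apply: ltn_mul.
  by rewrite ltnNge (leq_trans zm (leq_trans h2 tle)).
subst z.
have hm : m = p.
  apply/eqP; rewrite eqn_leq mz andbT -(leq_pmul2r (ltnW p1)).
  exact: leq_trans h2 tle.
subst m; split => //; apply/eqP; by rewrite eqn_leq tle h2.
Qed.

End Arith.

Lemma Lcore (gT : finGroupType) (P : {group gT}) (p : nat) (i0 : Iirr P) :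
  prime p -> (p.-group P)%g -> ~~ (P^`(1) \subset 'Z(P))%g -> cfaithful 'chi_i0 ->
  exists i j : Iirr P, [/\ p%:R < cod i, p%:R < cod j & cod i != cod j].
Proof.
move=> pp pP nc ff.
have p1 := prime_gt1 pp.
set Z := 'Z(P)%g.
have K0 : cfker 'chi_i0 = 1%g by apply/trivgP; rewrite -cfaithfulE.
have [d0 [hd0 d0pos]] := irr1_nat _ _ i0.
have sq0 : (d0 * d0 <= #|P : Z|%g)%N.
  by have := irr1_sq_le _ _ i0 d0 hd0; rewrite cfcenter_fful_irr.
have d01 : (1 < d0)%N.
  rewrite ltn_neqAle d0pos andbT; apply/negP => /eqP d1.
  have lin : 'chi_i0 \is a linear_char by apply: irr_lin1; rewrite hd0 -d1.
  move: (lin_char_der1 lin); rewrite K0 => h.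
  by apply: (negP nc); apply: subset_trans h (sub1G _).
have codchi : (p * d0 < #|P|)%N.
  by have := NL _ _ _ _ _ pP hd0 d01; rewrite K0 indexg1.
have gt_chi : p%:R < cod i0 by rewrite (cod_ltP _ _ i0 d0 p hd0) K0 indexg1.
have ntZ : (Z != 1)%g.
  rewrite /Z center_nil_eq1 ?(pgroup_nil pP) //; apply: contra nc => /eqP P1.
  by apply: subset_trans (der_sub 1 P) _; rewrite P1 sub1G.
have pZge : (p <= #|Z|)%N := pgroup_ge _ _ _ (pgroupS (center_sub P) pP) ntZ.
have LagZ : (#|Z| * #|P : Z|%g = #|P|)%N := Lagrange (center_sub P).
have nZP := normal_norm (center_normal P).
have [[x Px nx] | allp] : (exists2 x, x \in P & x ^+ p \notin P^`(1))%g
                          \/ {in P, forall x, x ^+ p \in P^`(1)}%g.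
  case: (pickP [pred x in P | x ^+ p \notin P^`(1)]%g) => [x /andP[] | h].
    by left; exists x.
  by right=> x Px; move: (h x); rewrite /= Px /= => /negbFE.
- have [i /andP[lin nk]] : exists i : Iirr P,
      ('chi_i \is a linear_char) && (x ^+ p \notin cfker 'chi_i)%g.
    apply/existsP; apply: contraR nx => /existsPn h.
    rewrite -cap_cfker_lin_irr; apply/bigcapP => i lin; move: (h i).
    by rewrite lin /= negbK.
  have [n En] := p_natP pP.
  have dv : (#['chi_i]%CF %| p ^ n)%N by rewrite -En; apply: cforder_lin_char_dvdG.
  have [k _ ok] := dvdn_pfactor _ _ pp dv.
  have k2 : (1 < k)%N.
    rewrite ltnNge; apply/negP => k1; apply: (negP nk).
    have dvp : (#['chi_i]%CF %| p)%N.
      by rewrite ok -{2}(expn1 p) dvdn_exp2l.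
    rewrite cfkerEchar ?lin_charW // inE groupX //= lin_charX // lin_char1 //.
    by move/dvdn_cforderP: dvp => /(_ x Px) ->.
  have [j [linj oj]] := lin_pow _ _ p i k 2 pp lin ok k2.
  have codj : cod j = (p ^ 2)%:R by rewrite cod_lin // oj.
  exists j, i0; split => //.
    by rewrite codj ltr_nat -{1}(expn1 p) ltn_exp2l.
  rewrite codj; apply/eqP => E.
  have E2 : (p ^ 2 * d0)%N = #|P|.
    apply/eqP; rewrite -(eqr_nat algC) natrM E /cod K0 indexg1 hd0 mulfVK //.
    by rewrite pnatr_eq0 -lt0n.
  have wle : (#|P : Z|%g <= p ^ 2)%N.
    move: LagZ sq0 pZge d01 p1; rewrite -E2; move: (#|P : Z|%g) (#|Z|) => w z.
    rewrite !expnS !expn0 !muln1 => LagZ' sq0' pZge' d01' p1'.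
    have s1 : (p * w <= p * (p * d0))%N by rewrite mulnA -LagZ' leq_mul2r pZge' orbT.
    have s2 : (w <= p * d0)%N by rewrite -(leq_pmul2l (ltnW p1')).
    have s3 : (d0 <= p)%N.
      by rewrite -(leq_pmul2l (ltnW d01')) (leq_trans sq0') // (leq_trans s2) // mulnC.
    by rewrite (leq_trans s2) // leq_mul2l s3 orbT.
  apply: (negP nc); apply: der1_min => //.
  apply: (small_abelian _ p) => //; first exact: quotient_pgroup.
  by rewrite card_quotient.
- pose gP := [pred M : {group gT} |
     [&& (M <| P)%g, (Z \subset M)%g & ~~ (P^`(1) \subset M)%g]].
  have gPZ : gP 'Z(P)%G by rewrite /gP /= center_normal subxx nc.
  have [M maxM _] := maxgroup_exists gPZ.
  have [/and3P[nMP sZM nPM] maxM'] := maxgroupP maxM.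
  have nMP' := normal_norm nMP.
  have [i /andP[sMi nPi]] : exists i : Iirr P,
      (M \subset cfker 'chi_i)%g && ~~ (P^`(1) \subset cfker 'chi_i)%g.
    apply/existsP; apply: contraR nPM => /existsPn h.
    rewrite -(cap_cfker_normal nMP); apply/bigcapsP => i sMi; move: (h i).
    by rewrite sMi /= negbK.
  have Ki : cfker 'chi_i = M.
    have gPi : gP (cfker_group 'chi_i).
      by rewrite /gP /= cfker_normal (subset_trans sZM sMi) nPi.
    by rewrite -(maxM' _ gPi sMi).
  have [e [he epos]] := irr1_nat _ _ i.
  have e1 : (1 < e)%N.
    rewrite ltn_neqAle epos andbT; apply/negP => /eqP d1.
    have lin : 'chi_i \is a linear_char by apply: irr_lin1; rewrite he -d1.
    by move: lin; rewrite lin_irr_der1 (negbTE nPi).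
  set Zc := 'Z('chi_i)%CF.
  have sMZc : (M \subset Zc)%g.
    by rewrite -Ki; apply: normal_sub (cfker_center_normal _).
  have sZcP : (Zc \subset P)%g := cfcenter_sub _.
  have ZcE : (Zc / M = 'Z(P / M))%g.
    by have := cfcenter_eq_center i; rewrite Ki.
  have ntPM : (P / M != 1)%g.
    apply: contra nPM => /eqP/trivgP; rewrite quotient_sub1 // => sPM.
    exact: subset_trans (der_sub 1 P) sPM.
  have ntZPM : ('Z(P / M) != 1)%g.
    by rewrite center_nil_eq1 // quotient_nil // (pgroup_nil pP).
  have pZPM : (p.-group 'Z(P / M))%g.
    by apply: pgroupS (center_sub _) _; apply: quotient_pgroup.
  have sPZc : (P^`(1) \subset Zc)%g.
    apply/negPn/negP => nP.
    have gPc : gP (cfcenter_group 'chi_i).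
      by rewrite /gP /= cfcenter_normal (subset_trans sZM sMZc) nP.
    have E := maxM' _ gPc sMZc.
    move: ntZPM; rewrite -ZcE /Zc.
    have -> : 'Z('chi_i)%CF = M by rewrite -[LHS]/(gval (cfcenter_group 'chi_i)) E.
    by rewrite trivg_quotient eqxx.
  have F2 : (e * e = #|P : Zc|%g)%N.
    have := irr1_abelian_bound (sub_der1_abelian (H := cfcenter_group 'chi_i) sPZc).
    by rewrite he -natrX => /eqP; rewrite eqr_nat expnS expn1 => /eqP.
  have [_ pdv _] := pgroup_pdiv pZPM ntZPM.
  have [yb Zyb oyb] := Cauchy pp pdv.
  pose O := (coset M @*^-1 <[yb]>)%G.
  have nOP : (O <| P)%g.
    rewrite -[X in (_ <| X)%g](quotientGK nMP) cosetpre_normal.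
    by apply: sub_center_normal; rewrite cycle_subG.
  have sMO : (M \subset O)%g := sub_cosetpre _.
  have sPO : (P^`(1) \subset O)%g.
    apply/negPn/negP => nPO.
    have gPO : gP O by rewrite /gP /= nOP (subset_trans sZM sMO) nPO.
    have E := maxM' _ gPO sMO.
    have := cosetpreK <[yb]>%g; rewrite -/(gval O) E trivg_quotient => h.
    have : #|<[yb]>%g| = 1%N by rewrite -h cards1.
    by rewrite -orderE oyb => p_1; rewrite p_1 in p1.
  have texp : {in Zc / M, forall u, u ^+ (p * p) = 1}%g.
    move=> _ /morphimP[w Nw Zw ->].
    have Pw := subsetP sZcP w Zw.
    have : (w ^+ p \in O)%g := subsetP sPO _ (allp w Pw).
    case/morphpreP => _ cy.
    rewrite expgM -morphX //.
    by have := @expg_cardG _ <[yb]>%G _ cy; rewrite /= -orderE oyb.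
  have cycZc : cyclic (Zc / M)%g by have := cfcenter_cyclic 'chi_i; rewrite Ki.
  have nZcM : (Zc \subset 'N(M))%g := subset_trans sZcP nMP'.
  have tdvd : (#|Zc : M|%g %| p * p)%N.
    by rewrite -card_quotient //; apply: cyclic_card_dvd.
  case: (eqVneq (cod i) (cod i0)) => [E | ne]; last first.
    exists i, i0; split => //.
    rewrite (cod_ltP _ _ i e p he); exact: NL _ _ _ _ _ pP he e1.
  exfalso; move/eqP: E; rewrite (cod_eqP _ _ i i0 e d0 he hd0) K0 indexg1 Ki => /eqP E.
  have LagPM : (#|P : Zc|%g * #|Zc : M|%g = #|P : M|%g)%N by apply: Lagrange_index.
  have LagM : (#|M| * #|P : M|%g = #|P|)%N := Lagrange (normal_sub nMP).
  have mz : (#|Z| <= #|M|)%N := subset_leq_card sZM.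
  have tle : (#|Zc : M|%g <= p * p)%N by apply: dvdn_leq; rewrite ?muln_gt0 ?(ltnW p1).
  have t0 : (0 < #|Zc : M|%g)%N := indexg_gt0 _ _.
  have [hz hm ht] := arith1 _ _ _ _ _ _ _ _ _ _ E LagPM LagM mz tle t0 LagZ sq0 F2 pZge epos p1.
  have ZM : Z = M by apply/eqP; rewrite eqEcard sZM hm hz leqnn.
  have cexp : {in Zc / M, forall u, u ^+ p = 1}%g.
    move=> _ /morphimP[w Nw Zw ->].
    have Pw := subsetP sZcP w Zw.
    rewrite -morphX //; apply: coset_id.
    rewrite -ZM /Z; apply/centerP; split; first by rewrite groupX.
    move=> y Py.
    have cwy : ([~ w, y] \in Z)%g.
      rewrite ZM; apply: coset_idr; first by rewrite groupR // (subsetP nMP').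
      rewrite morphR ?(subsetP nMP') //.
      have : (coset M w \in 'Z(P / M))%g by rewrite -ZcE mem_quotient.
      case/centerP => _ /(_ (coset M y) (mem_quotient M Py)) h.
      by apply/eqP/commgP.
    have cw : commute w [~ w, y]%g := centerC Pw cwy.
    have c1 : ([~ w ^+ p, y] = 1)%g.
      by rewrite commXg //; have := @expg_cardG _ 'Z(P)%G _ cwy; rewrite /= -/Z hz.
    by apply/commgP/eqP.
  have : (#|Zc : M|%g %| p)%N by rewrite -card_quotient //; apply: cyclic_card_dvd.
  rewrite ht => /dvdn_leq => /(_ (ltnW p1)).
  by move=> h; have := ltn_Pmull p1 (ltnW p1); rewrite ltnNge h.
Qed.

Lemma has_cod_p (gT : finGroupType) (P : {group gT}) (p : nat) :
  prime p -> (p.-group P)%g -> (P :!=: 1)%g -> exists i : Iirr P, cod i = p%:R.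
Proof.
move=> pp pP ntP.
have prop : (P^`(1) \proper P)%g := sol_der1_proper (nilpotent_sol (pgroup_nil pP)) (subxx P) ntP.
have : (1 < #|P : P^`(1)|%g)%N by rewrite indexg_gt1 proper_subn.
rewrite -card_lin_irr => h.
have [i /andP[lin i0]] : exists i : Iirr P, ('chi_i \is a linear_char) && (i != 0).
  apply/existsP; apply: contraTT h => /existsPn H0.
  rewrite -leqNgt (leq_trans (subset_leq_card (_ : _ \subset pred1 0))) ?card1 //.
  by apply/subsetP => i; rewrite !inE => lin; move: (H0 i); rewrite lin /= negbK.
have [n En] := p_natP pP.
have dv : (#['chi_i]%CF %| p ^ n)%N by rewrite -En; apply: cforder_lin_char_dvdG.
have [k _ ok] := dvdn_pfactor _ _ pp dv.
have k1 : (0 < k)%N.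
  by rewrite lt0n; apply: contra i0 => /eqP k0; rewrite -cforder_irr_eq1 ok k0.
have [j [linj oj]] := lin_pow _ _ p i k 1 pp lin ok k1.
by exists j; rewrite cod_lin // oj expn1.
Qed.

Lemma Lall (p : nat) (pp : prime p) (n : nat) : forall (gT : finGroupType) (P : {group gT}),
  (#|P| <= n)%N -> (p.-group P)%g -> ~~ (P^`(1) \subset 'Z(P))%g ->
  exists i j : Iirr P, [/\ p%:R < cod i, p%:R < cod j & cod i != cod j].
Proof.
elim: n => [|n IH] gT P le pP nc.
  by move: le; rewrite leqNgt cardG_gt0.
case: (boolP [exists i : Iirr P, cfaithful 'chi_i]) => [/existsP[i0 ff] | nf].
  exact: Lcore pp pP nc ff.
have nilP := pgroup_nil pP.
have ntL : ('L_3(P) != 1)%g.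
  apply: contra nc => /eqP L1; rewrite -nil_class2; exact/lcn_nil_classP.
have [i nLi] : exists i : Iirr P, ~~ ('L_3(P) \subset cfker 'chi_i)%g.
  apply/existsP; apply: contraR ntL => /existsPn h.
  rewrite -subG1 -(TI_cfker_irr P); apply/bigcapsP => i _; move: (h i).
  by rewrite negbK.
have nK := cfker_normal 'chi_i.
have ntK : (cfker 'chi_i != 1)%g.
  apply: contra nf => /eqP K1; apply/existsP; exists i; rewrite cfaithfulE K1.
  exact: subxx.
have leQ : (#|P / cfker 'chi_i|%g <= n)%N.
  by rewrite -ltnS (leq_trans _ le) // ltn_quotient // cfker_sub.
have pQ : (p.-group (P / cfker 'chi_i))%g := quotient_pgroup _ pP.
have ncQ : ~~ ((P / cfker 'chi_i)^`(1) \subset 'Z(P / cfker 'chi_i))%g.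
  by rewrite -nil_class2 (class_quo _ _ (cfker_group 'chi_i)).
have [i' [j' [gi gj nij]]] := IH _ (P / cfker 'chi_i)%G leQ pQ ncQ.
exists (mod_Iirr i'), (mod_Iirr j').
by rewrite !(cod_mod _ _ (cfker_group 'chi_i)).
Qed.

Lemma big_in (p a b : nat) (c : algC) : (1 < p)%N ->
  c \in [:: 1; p%:R; (p ^ b)%:R; (p ^ a)%:R] -> p%:R < c ->
  (c == (p ^ b)%:R) || (c == (p ^ a)%:R).
Proof.
move=> p1; rewrite !inE => /or4P[] /eqP ->.
- by rewrite (_ : 1 = 1%:R) // ltr_nat ltnNge (ltnW p1).
- by rewrite ltr_nat ltnn.
- by rewrite eqxx.
- by rewrite eqxx orbT.
Qed.

Theorem lemma2p6 (gT : finGroupType) (G : {group gT}) (p a b n : nat) :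
  prime p -> (p.-group G)%g ->
  (2 <= b)%N -> (b < a)%N ->
  cod_set_eq G [:: 1; p%:R; (p ^ b)%:R; (p ^ a)%:R] ->
  nil_class G = n -> (3 <= n)%N ->
  (forall (hT : finGroupType) (H : {group hT}),
      (p.-group H)%g ->
      cod_set_eq H [:: 1; p%:R; (p ^ b)%:R; (p ^ a)%:R] ->
      (#|H| < #|G|)%N -> nil_class H <> n) ->
  exists i : Iirr G, cfaithful 'chi[G]_i.
Proof.
move=> pp pG b2 ba hcod hn n3 hmin.
case: (boolP [exists i : Iirr G, cfaithful 'chi_i]) => [/existsP[i ff] | nf].
  by exists i.
exfalso.
have nilG := pgroup_nil pG.
have p1 := prime_gt1 pp.
have n0 : (0 < n)%N by apply: leq_trans n3.
have ntL : ('L_n(G) != 1)%g.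
  apply/eqP => L1.
  have : (nil_class G <= n.-1)%N by apply/(lcn_nil_classP n.-1 nilG); rewrite prednK.
  by rewrite hn; case: (n) n0 => //= m _; rewrite ltnn.
have [i nLi] : exists i : Iirr G, ~~ ('L_n(G) \subset cfker 'chi_i)%g.
  apply/existsP; apply: contraR ntL => /existsPn h.
  rewrite -subG1 -(TI_cfker_irr G); apply/bigcapsP => i _; move: (h i).
  by rewrite negbK.
pose K := cfker_group 'chi_i.
have nK : (K <| G)%g := cfker_normal 'chi_i.
have ntK : (K :!=: 1)%g.
  apply: contra nf => /eqP K1; apply/existsP; exists i; rewrite cfaithfulE.
  by rewrite -[cfker _]/(gval K) K1.
have hH : nil_class (G / K) = n.
  apply/eqP; rewrite eqn_leq (class_quo _ _ K n nK nilG).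
  have -> : ('L_n.+1(G) = 1)%g by apply/(lcn_nil_classP n nilG); rewrite hn.
  rewrite sub1G /= leqNgt -(prednK n0) ltnS (class_quo _ _ K n.-1 nK nilG).
  by rewrite prednK.
have pQ : (p.-group (G / K))%g := quotient_pgroup _ pG.
have ltQ : (#|(G / K)%G| < #|G|)%N by apply: ltn_quotient => //; exact: cfker_sub.
apply: (hmin _ (G / K)%G pQ _ ltQ hH).
have memS : forall j : Iirr (G / K), cod j \in [:: 1; p%:R; (p ^ b)%:R; (p ^ a)%:R].
  by move=> j; rewrite -(cod_mod _ _ K nK j); apply/hcod; exists (mod_Iirr j).
have ncQ : ~~ ((G / K)^`(1) \subset 'Z(G / K))%g.
  by rewrite -nil_class2 hH -ltnNge.
have [i1 [j1 [gi gj nij]]] := Lall p pp _ _ (G / K)%G (leqnn _) pQ ncQ.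
have Bi := big_in p a b _ p1 (memS i1) gi.
have Bj := big_in p a b _ p1 (memS j1) gj.
move=> x; split.
  by case=> j <-; apply: memS.
rewrite !inE => /or4P[] /eqP ->.
- by exists 0; apply: cod0.
- apply: has_cod_p => //.
  by rewrite -nil_class0 hH -lt0n.
- case/orP: Bi => [/eqP ei | /eqP ei]; first by exists i1.
  case/orP: Bj => [/eqP ej | /eqP ej]; first by exists j1.
  by move: nij; rewrite ei ej eqxx.
- case/orP: Bi => [/eqP ei | /eqP ei]; last by exists i1.
  case/orP: Bj => [/eqP ej | /eqP ej]; last by exists j1.
  by move: nij; rewrite ei ej eqxx.
Qed.
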